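(* For $n\ge 2$, $\mathscr{Z}^{\rm TAR}(K_n)\cong K_{1,n}$. Furthermore, $\overline{\operatorname{Z}}(K_n)=\operatorname{Z}(K_n)=n-1$ and $z_0(K_n)=\underline{z_0}(K_n)=n$.
   Context: Zero forcing on a graph $G$: starting with a set $S$ of blue vertices (others white), a blue vertex $v$ may change a white vertex $w$ to blue if $w$ is the only white neighbor of $v$. $S$ is a zero forcing set if repeated application colors all of $V(G)$ blue. $\operatorname{Z}(G)$ is the minimum size of a zero forcing set, $\overline{\operatorname{Z}}(G)$ the maximum size of a minimal (under inclusion) zero forcing set. $\mathscr{Z}^{\rm TAR}(G)$ has vertices the zero forcing sets of $G$, two adjacent iff their symmetric difference has size 1; $\mathscr{Z}^{\rm TAR}_k(G)$ is its subgraph induced by zero forcing sets of size at most $k$. $\underline{z_0}(G)$ is the least $k$ with $\mathscr{Z}^{\rm TAR}_k(G)$ connected; $z_0(G)$ is the least $k$ such that $\mathscr{Z}^{\rm TAR}_i(G)$ is connected for every $i=k,\dots,|V(G)|$. $K_{1,n}$ is the star with $n$ leaves. *)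

(* Defs.v *)
From Stdlib Require Import Relations.
From mathcomp Require Import all_boot.
Set Implicit Arguments. Unset Strict Implicit. Unset Printing Implicit Defensive.

Section ZF.
Variables (T : finType) (e : rel T).

(* One force: a blue vertex v changes its unique white neighbor w to blue. *)
Definition zf_step (B B' : {set T}) : Prop :=
  exists v w, [/\ v \in B, w \notin B, e v w,
     (forall u, e v u -> u \notin B -> u = w) & B' = w |: B].

Definition zero_forcing (S : {set T}) : Prop :=
  clos_refl_trans _ zf_step S [set: T].

Definition is_Z (k : nat) : Prop :=
  (exists S, zero_forcing S /\ #|S| = k) /\
  (forall S, zero_forcing S -> k <= #|S|).

Definition minimal_zf (S : {set T}) : Prop :=
  zero_forcing S /\ (forall S' : {set T}, S' \proper S -> ~ zero_forcing S').

Definition is_Zbar (k : nat) : Prop :=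
  (exists S, minimal_zf S /\ #|S| = k) /\
  (forall S, minimal_zf S -> #|S| <= k).

Definition tar_adj (S S' : {set T}) : bool := #|(S :\: S') :|: (S' :\: S)| == 1.

Definition TARvert := {S : {set T} | zero_forcing S}.

Definition TAR_connected (k : nat) : Prop :=
  (exists S, zero_forcing S /\ #|S| <= k) /\
  (forall S1 S2, zero_forcing S1 -> #|S1| <= k ->
                 zero_forcing S2 -> #|S2| <= k ->
     clos_refl_trans _ (fun A B => [/\ zero_forcing A, #|A| <= k,
                                       zero_forcing B, #|B| <= k & tar_adj A B])
                     S1 S2).

Definition is_uz0 (k : nat) : Prop :=
  TAR_connected k /\ (forall j, j < k -> ~ TAR_connected j).

Definition conn_from (k : nat) : Prop :=
  forall i, k <= i <= #|T| -> TAR_connected i.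

Definition is_z0 (k : nat) : Prop :=
  conn_from k /\ (forall j, j < k -> ~ conn_from j).

End ZF.

Definition Kn (n : nat) : rel 'I_n := fun i j => i != j.

Definition star_adj {n : nat} (x y : option 'I_n) : bool :=
  match x, y with
  | None, Some _ | Some _, None => true
  | _, _ => false
  end.

Definition TAR_iso_star (T : finType) (e : rel T) (n : nat) : Prop :=
  exists f : TARvert e -> option 'I_n,
    bijective f /\
    forall x y : TARvert e, tar_adj (sval x) (sval y) = star_adj (f x) (f y).
Arguments Kn n : clear implicits.

(* Main.v *)
Require Import Defs.
From mathcomp Require Import all_boot.
From mathcomp Require Import zify.
From Stdlib Require Import Relations ProofIrrelevance.
Set Implicit Arguments. Unset Strict Implicit. Unset Printing Implicit Defensive.

Section K.
Variable n : nat.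

Lemma zf_fwd (S : {set 'I_n}) : zero_forcing (Kn n) S -> #|~: S| <= 1.
Proof.
move=> H0; apply clos_rt_rt1n in H0; inversion H0 as [|y z st]; subst.
  by rewrite setCT cards0.
case: st => v [w [vB wB _ Hu _]].
have sub : ~: S \subset [set w].
  apply/subsetP => u; rewrite inE => uB; rewrite inE; apply/eqP; apply: Hu => //.
  rewrite /Kn; apply/eqP => uv; subst; by rewrite vB in uB.
by rewrite -(cards1 w) subset_leq_card.
Qed.

Lemma zf_bwd (hn : 1 < n) (S : {set 'I_n}) : #|~: S| <= 1 -> zero_forcing (Kn n) S.
Proof.
move=> H.
have /orP [/eqP C0|/eqP C1] : (#|~:S| == 0) || (#|~:S| == 1) by lia.
  have -> : S = setT by rewrite -[S]setCK (cards0_eq C0) setC0.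
  exact: rt_refl.
have hc := cardsC S; rewrite card_ord C1 in hc.
have /card_gt0P [v vS] : 0 < #|S| by lia.
have [w Hw] := cards1P (introT eqP C1).
have xw : forall x, (x \in S) = (x != w).
  move=> x; have := congr1 (fun A : {set 'I_n} => x \in A) Hw; rewrite /= !inE.
  by case: (x \in S); case: (x == w).
apply: rt_step; exists v, w; split => //.
- by rewrite xw eqxx.
- by rewrite /Kn -xw.
- by move=> u _; rewrite xw negbK => /eqP.
- apply/setP => x; rewrite !inE xw; by case: (x == w).
Qed.

Lemma zf_iff (hn : 1 < n) (S : {set 'I_n}) : zero_forcing (Kn n) S <-> #|~: S| <= 1.
Proof. split; [exact: zf_fwd | exact: zf_bwd]. Qed.

Lemma zf_cases (S : {set 'I_n}) : zero_forcing (Kn n) S -> S = setT \/ exists i, S = [set~ i].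
Proof.
move/zf_fwd=> H.
have /orP [/eqP C0|/eqP C1] : (#|~:S| == 0) || (#|~:S| == 1) by lia.
  by left; rewrite -[S]setCK (cards0_eq C0) setC0.
have [w Hw] := cards1P (introT eqP C1); right; exists w; by rewrite -Hw setCK.
Qed.

Lemma zfT : zero_forcing (Kn n) setT.
Proof. exact: rt_refl. Qed.

Lemma zfC (hn : 1 < n) (i : 'I_n) : zero_forcing (Kn n) [set~ i].
Proof. by apply: zf_bwd => //; rewrite setCK cards1. Qed.

Lemma tarTT : tar_adj (setT : {set 'I_n}) (setT : {set 'I_n}) = false.
Proof. by rewrite /tar_adj setDv setU0 cards0. Qed.

Lemma tarTC (i : 'I_n) : tar_adj setT [set~ i] = true.
Proof.
rewrite /tar_adj.
have -> : (setT :\: [set~ i]) :|: ([set~ i] :\: setT) = [set i].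
  by apply/setP => x; rewrite !inE; case: (x == i).
by rewrite cards1.
Qed.

Lemma tarCT (i : 'I_n) : tar_adj [set~ i] setT = true.
Proof. by rewrite /tar_adj setUC -(tarTC i). Qed.

Lemma tarCC (i j : 'I_n) : tar_adj [set~ i] [set~ j] = false.
Proof.
rewrite /tar_adj.
have [<-|ij] := eqVneq i j; first by rewrite setDv setU0 cards0.
have -> : ([set~ i] :\: [set~ j]) :|: ([set~ j] :\: [set~ i]) = [set j; i].
  apply/setP => x; rewrite !inE !negbK.
  case xj: (x == j); case xi: (x == i) => //=.
  by move/eqP: xj => xj; move/eqP: xi => xi; subst; rewrite eqxx in ij.
by rewrite cards2; move: ij; rewrite eq_sym => ->.
Qed.

Lemma zf_card (hn : 1 < n) (S : {set 'I_n}) : zero_forcing (Kn n) S <-> n - 1 <= #|S|.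
Proof.
rewrite zf_iff //; have := cardsC S; rewrite card_ord => h; split => H; lia.
Qed.

Definition gK (hn : 1 < n) (a : option 'I_n) : TARvert (Kn n) :=
  match a with None => exist _ setT zfT | Some i => exist _ [set~ i] (zfC hn i) end.
Definition fK (x : TARvert (Kn n)) : option 'I_n := [pick i in ~: sval x].

Lemma fgK (hn : 1 < n) : cancel (gK hn) fK.
Proof.
case=> [i|] /=; rewrite /fK /=.
  case: pickP => [j|]; first by rewrite setCK inE => /eqP ->.
  by move/(_ i); rewrite setCK inE eqxx.
by case: pickP => // j; rewrite setCT inE.
Qed.

Lemma gfK (hn : 1 < n) : cancel fK (gK hn).
Proof.
case=> S HS.
have Hc := zf_cases HS.
case: Hc => [E|[i E]]; subst S.
  rewrite /fK /=; case: pickP => [j|_]; first by rewrite setCT inE.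
  by rewrite /=; f_equal; apply: proof_irrelevance.
have -> : fK (exist _ [set~ i] HS) = Some i.
  rewrite /fK /=; case: pickP => [j|]; first by rewrite setCK inE => /eqP ->.
  by move/(_ i); rewrite setCK inE eqxx.
by rewrite /=; f_equal; apply: proof_irrelevance.
Qed.

Lemma not_conn (hn : 1 < n) k : k < n -> ~ TAR_connected (Kn n) k.
Proof.
move=> kn [[S [zS cS]] Hc].
move/(zf_card hn): zS => cS'.
have hcC : forall i : 'I_n, #|[set~ i]| = n - 1.
  by move=> i; rewrite cardsC1 card_ord; lia.
pose i0 : 'I_n := Ordinal (ltnW hn).
pose i1 : 'I_n := Ordinal hn.
have c0 : #|[set~ i0]| <= k by rewrite hcC; apply: leq_trans cS' cS.
have c1 : #|[set~ i1]| <= k by rewrite hcC; apply: leq_trans cS' cS.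
have H := Hc [set~ i0] [set~ i1] (zfC hn i0) c0 (zfC hn i1) c1.
suff : [set~ i0] = [set~ i1] by move/setC_inj/set1_inj => /(congr1 val).
elim: H => [x y [hx kx hy ky adj]| x | x y z _ -> _ ->] //.
case: (zf_cases hx) => [E|[a E]]; subst x.
  by move: kx; rewrite cardsT card_ord; lia.
case: (zf_cases hy) => [E|[b E]]; subst y.
  by move: ky; rewrite cardsT card_ord; lia.
by rewrite tarCC in adj.
Qed.

Lemma conn_ge (hn : 1 < n) k : n <= k -> TAR_connected (Kn n) k.
Proof.
move=> nk; split.
  by exists setT; split; [exact: zfT | rewrite cardsT card_ord].
move=> S1 S2 z1 c1 z2 c2.
have cT : #|(setT : {set 'I_n})| <= k by rewrite cardsT card_ord.
have toT : forall A : {set 'I_n}, zero_forcing (Kn n) A -> #|A| <= k ->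
  clos_refl_trans _ (fun A B => [/\ zero_forcing (Kn n) A, #|A| <= k,
                                       zero_forcing (Kn n) B, #|B| <= k & tar_adj A B]) A setT /\
  clos_refl_trans _ (fun A B => [/\ zero_forcing (Kn n) A, #|A| <= k,
                                       zero_forcing (Kn n) B, #|B| <= k & tar_adj A B]) setT A.
  move=> A zA cA; case: (zf_cases zA) => [E|[a E]]; subst A.
    by split; apply: rt_refl.
  split; apply: rt_step; split => //; try exact: zfT.
    exact: tarCT.
  exact: tarTC.
apply: (@rt_trans _ _ _ setT); [exact: (toT _ z1 c1).1 | exact: (toT _ z2 c2).2].
Qed.

End K.

Theorem proposition1p4 (n : nat) (hn : 2 <= n) :
  TAR_iso_star (Kn n) n /\
  is_Zbar (Kn n) (n - 1) /\ is_Z (Kn n) (n - 1) /\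
  is_z0 (Kn n) n /\ is_uz0 (Kn n) n.
Proof.
have hcC : forall i : 'I_n, #|[set~ i]| = n - 1.
  by move=> i; rewrite cardsC1 card_ord; lia.
pose i0 : 'I_n := Ordinal (ltnW hn).
split.
  exists (@fK n); split; first by exists (gK hn); [exact: gfK | exact: fgK].
  have key : forall a b, tar_adj (sval (gK hn a)) (sval (gK hn b)) = star_adj a b.
    case=> [i|]; case=> [j|] /=;
      by rewrite ?tarTT ?tarTC ?tarCT ?tarCC.
  by move=> x y; rewrite -(gfK hn x) -(gfK hn y) key !fgK.
split.
  split.
    exists [set~ i0]; split; last exact: hcC.
    split; first exact: zfC.
    move=> S' /proper_card; rewrite hcC => lt /(zf_card hn) h; by rewrite ltnNge h in lt.
  move=> S [zS Hm]; case: (zf_cases zS) => [E|[a E]]; subst S; last by rewrite hcC.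
  exfalso; apply: (Hm [set~ i0]); last exact: zfC.
  rewrite properT; apply/eqP => E; have := congr1 (fun A : {set 'I_n} => i0 \in A) E; by rewrite /= !inE eqxx.
split.
  split; first by exists [set~ i0]; split; [exact: zfC | exact: hcC].
  by move=> S /(zf_card hn).
split.
  split.
    move=> i; rewrite card_ord => /andP [a b]; apply: conn_ge => //.
  move=> j jn H; apply: (@not_conn n hn (n - 1)); first lia.
  apply: H; rewrite card_ord; apply/andP; split; lia.
split; first exact: conn_ge.
move=> j jn; exact: not_conn.
Qed.
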